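(* Let $\mathbf{x}_1,\dots,\mathbf{x}_n$ be examples with instance labels $y_i^I=i$, target labels $y_i^F\in\{1,\dots,F\}$ where every target class contains exactly $z$ examples ($zF=n$), and coarse labels $y_i^C\in\{1,\dots,C\}$ such that examples with the same target label have the same coarse label. Let $f^H$ be a feature map to $\mathbb{R}^d$, let $W^I=(\mathbf{w}^I_1,\dots,\mathbf{w}^I_n)\in\mathbb{R}^{d\times n}$, and let $W^C=(\mathbf{w}^C_1,\dots,\mathbf{w}^C_C)\in\mathbb{R}^{d\times C}$. Define \[\Pr\{y_i^I\mid f^H(\mathbf{x}_i),W^I\}=\frac{\exp(f^H(\mathbf{x}_i)^\top\mathbf{w}^I_{y_i^I})}{\sum_{j=1}^n\exp(f^H(\mathbf{x}_i)^\top\mathbf{w}^I_j)},\qquad \Pr\{y_i^C\mid f^H(\mathbf{x}_i),W^C\}=\frac{\exp(f^H(\mathbf{x}_i)^\top\mathbf{w}^C_{y_i^C})}{\sum_{k=1}^C\exp(f^H(\mathbf{x}_i)^\top\mathbf{w}^C_k)},\] \[\Pr\{y_i^F\mid f^H(\mathbf{x}_i),W^I\}=\frac{\exp(f^H(\mathbf{x}_i)^\top\bar{\mathbf{w}}^I_{y_i^F})}{\sum_{s=1}^F\exp(f^H(\mathbf{x}_i)^\top\bar{\mathbf{w}}^I_s)},\qquad \bar{\mathbf{w}}^I_s=\frac1z\sum_{j:\,y_j^F=s}\mathbf{w}^I_j.\] Assume $\|f^H(\mathbf{x}_i)\|_2\le c$, $\|\mathbf{w}^I_j\|_2\le c$ and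 $\|\mathbf{w}^C_k\|_2\le c$ for all $i,j,k$. Assume also that, for all $i$, $\Pr\{y_i^I\mid f^H(\mathbf{x}_i),W^I\}\ge\alpha$ and $\Pr\{y_i^C\mid f^H(\mathbf{x}_i),W^C\}\ge\beta$. Then there is a constant $h(c,\alpha,\beta)\le1$, depending on $c,\alpha,\beta$, such that for all $i$ \[\Pr\{y_i^F\mid f^H(\mathbf{x}_i),W^I\}\ge\alpha z\,h(c,\alpha,\beta).\]
   Context: The setting is a network with a shared feature extractor $f^H$ and two fully-connected heads without bias: $W^C$ for coarse-class classification and $W^I$ for instance classification. They are trained jointly by minimizing $\sum_i\ell(\mathbf{x}_i,y_i^C)+\lambda\sum_i\ell(\mathbf{x}_i,y_i^I)$ with softmax cross-entropy $\ell$. The constants $\alpha,\beta$ are the accuracies this training achieves, and $\lambda$ trades them off. The result itself is a statement about any $f^H$, $W^I$, $W^C$ that satisfy the hypotheses. *)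

(* Defs.v *)
From mathcomp Require Import all_boot all_order all_algebra.
From mathcomp Require Import reals sequences exp.
Set Implicit Arguments. Unset Strict Implicit. Unset Printing Implicit Defensive.
Import Order.TTheory GRing.Theory Num.Theory.
Local Open Scope ring_scope.

Definition dotv (R : realType) (d : nat) (u v : 'rV[R]_d) : R :=
  \sum_(k < d) u 0 k * v 0 k.

Definition norm2 (R : realType) (d : nat) (u : 'rV[R]_d) : R :=
  Num.sqrt (dotv u u).

Definition softmax_prob (R : realType) (d K : nat)
  (f : 'rV[R]_d) (W : 'I_K -> 'rV[R]_d) (y : 'I_K) : R :=
  expR (dotv f (W y)) / \sum_(k < K) expR (dotv f (W k)).

Definition wbar (R : realType) (d n F : nat) (z : nat)
  (yF : 'I_n -> 'I_F) (WI : 'I_n -> 'rV[R]_d) (s : 'I_F) : 'rV[R]_d :=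
  (z%:R)^-1 *: \sum_(j < n | yF j == s) WI j.

(* Main.v *)
Require Import Defs.
From mathcomp Require Import all_boot all_order all_algebra.
From mathcomp Require Import reals sequences exp.
From mathcomp Require Import ring lra.
Import Order.TTheory GRing.Theory Num.Theory.
Local Open Scope ring_scope.

Section Aux.
Context {R : realType}.

Lemma dot_ge0 {d} (u : 'rV[R]_d) : 0 <= dotv u u.
Proof. by apply: sumr_ge0 => k _; rewrite -expr2 sqr_ge0. Qed.

Lemma dot_sq_le {d} {u : 'rV[R]_d} {c} : norm2 u <= c -> dotv u u <= c ^+ 2.
Proof.
move=> H; rewrite -(sqr_sqrtr (dot_ge0 u)).
have h0 : 0 <= Num.sqrt (dotv u u) by apply: sqrtr_ge0.
rewrite /norm2 in H. apply: ler_pM => //.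
Qed.

Lemma dot_2 {d} (u v : 'rV[R]_d) :
  dotv u u + dotv v v - 2 * dotv u v = \sum_(k < d) (u 0 k - v 0 k) ^+ 2 /\
  dotv u u + dotv v v + 2 * dotv u v = \sum_(k < d) (u 0 k + v 0 k) ^+ 2.
Proof.
rewrite /dotv mulr_sumr -big_split -sumrB /=; split.
  by apply: eq_bigr => k _; ring.
by rewrite -big_split /=; apply: eq_bigr => k _; ring.
Qed.

Lemma dot_bound {d} {u v : 'rV[R]_d} {c} :
  norm2 u <= c -> norm2 v <= c -> - c ^+ 2 <= dotv u v <= c ^+ 2.
Proof.
move=> Hu Hv; have := dot_sq_le Hv; have := dot_sq_le Hu.
have [E1 E2] := dot_2 u v.
have P1 : 0 <= \sum_(k < d) (u 0 k - v 0 k) ^+ 2 by apply: sumr_ge0 => k _; apply: sqr_ge0.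
have P2 : 0 <= \sum_(k < d) (u 0 k + v 0 k) ^+ 2 by apply: sumr_ge0 => k _; apply: sqr_ge0.
move=> h1 h2; apply/andP; split; lra.
Qed.

Lemma dot_lin {d} (I : finType) (P : pred I) (f : 'rV[R]_d) (W : I -> 'rV[R]_d) a :
  dotv f (a *: \sum_(j | P j) W j) = a * \sum_(j | P j) dotv f (W j).
Proof.
rewrite /dotv.
under eq_bigr => k _ do rewrite !mxE summxE !mulr_sumr.
rewrite exchange_big /= mulr_sumr; apply: eq_bigr => j _; rewrite mulr_sumr.
by apply: eq_bigr => k _; ring.
Qed.

Lemma ratio (N N' D D' : R) : 0 < D -> 0 < D' -> 0 <= N -> N <= N' -> D' <= D ->
  N / D <= N' / D'.
Proof.
move=> hD hD' hN hNN hDD; apply: ler_pM => //; first by rewrite invr_ge0 ltW.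
by rewrite lef_pV2 // posrE.
Qed.

End Aux.

Theorem theorem1 (R : realType) :
  exists h : R -> R -> R -> R,
    (forall c alpha beta, 0 < h c alpha beta <= 1) /\
    forall (X : Type) (n F C z d : nat)
      (x : 'I_n -> X) (yF : 'I_n -> 'I_F) (yC : 'I_n -> 'I_C)
      (fH : X -> 'rV[R]_d) (WI : 'I_n -> 'rV[R]_d) (WC : 'I_C -> 'rV[R]_d)
      (c alpha beta : R),
      (forall s : 'I_F, #|[set j : 'I_n | yF j == s]| = z) ->
      (z * F = n)%N ->
      (forall i j : 'I_n, yF i = yF j -> yC i = yC j) ->
      (forall i, norm2 (fH (x i)) <= c) ->
      (forall j, norm2 (WI j) <= c) ->
      (forall k, norm2 (WC k) <= c) ->
      (forall i, softmax_prob (fH (x i)) WI i >= alpha) ->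
      (forall i, softmax_prob (fH (x i)) WC (yC i) >= beta) ->
      forall i : 'I_n,
        softmax_prob (fH (x i)) (wbar z yF WI) (yF i)
          >= alpha * z%:R * h c alpha beta.
Proof.
exists (fun c _ _ => (expR (- c ^+ 2) / expR (c ^+ 2)) ^+ 2).
split.
  move=> c _ _; have ha := expR_gt0 (- c ^+ 2); have hb := expR_gt0 (c ^+ 2).
  have hab : expR (- c ^+ 2) <= expR (c ^+ 2).
    by rewrite ler_expR; have := sqr_ge0 c; lra.
  have q0 : 0 < expR (- c ^+ 2) / expR (c ^+ 2) by apply: divr_gt0.
  have q1 : expR (- c ^+ 2) / expR (c ^+ 2) <= 1 by rewrite ler_pdivrMr // mul1r.
  apply/andP; split; first by apply: exprn_gt0.
  by apply: exprn_ile1 => //; apply: ltW.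
move=> X n F C z d x yF yC fH WI WC c alpha beta Hz HzF _ Hf HWI _ Hal _ i.
set a := expR (- c ^+ 2); set b := expR (c ^+ 2).
have ha : 0 < a := expR_gt0 _. have hb : 0 < b := expR_gt0 _.
set f := fH (x i).
have n0 : (0 < n)%N := leq_ltn_trans (leq0n i) (ltn_ord i).
have F0 : (0 < F)%N := leq_ltn_trans (leq0n (yF i)) (ltn_ord (yF i)).
have z0 : (0 < z)%N by move: n0; rewrite -HzF muln_gt0 => /andP[].
have Hn : n%:R = z%:R * F%:R :> R by rewrite -HzF natrM.
have Eb t : - c ^+ 2 <= t <= c ^+ 2 -> a <= expR t <= b.
  by case/andP => t1 t2; rewrite /a /b !ler_expR t1 t2.
have DI j : a <= expR (dotv f (WI j)) <= b by apply: Eb; exact: (dot_bound (Hf i) (HWI j)).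
have DF s : a <= expR (dotv f (wbar z yF WI s)) <= b.
  apply: Eb; rewrite /wbar dot_lin.
  have cardP : #|[pred j : 'I_n | yF j == s]| = z by rewrite -cardsE Hz.
  have zpos : (0 : R) < z%:R by rewrite ltr0n.
  have S1 : \sum_(j | yF j == s) dotv f (WI j) <= c ^+ 2 * z%:R.
    apply: le_trans (_ : \sum_(j | yF j == s) c ^+ 2 <= _).
      by apply: ler_sum => j _; case/andP: (dot_bound (Hf i) (HWI j)).
    by rewrite sumr_const cardP mulr_natr.
  have S2 : - c ^+ 2 * z%:R <= \sum_(j | yF j == s) dotv f (WI j).
    apply: le_trans (_ : \sum_(j | yF j == s) (- c ^+ 2) <= _).
      by rewrite sumr_const cardP mulr_natr.
    by apply: ler_sum => j _; case/andP: (dot_bound (Hf i) (HWI j)).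
  apply/andP; split.
    by rewrite ler_pdivlMl // mulrC.
  by rewrite ler_pdivrMl // mulrC.
have Hup : alpha <= b / (n%:R * a).
  apply: le_trans (Hal i) _; rewrite /softmax_prob.
  have Sn : n%:R * a <= \sum_(k < n) expR (dotv f (WI k)).
    apply: le_trans (_ : \sum_(k < n) a <= _).
      by rewrite sumr_const card_ord mulr_natl.
    by apply: ler_sum => k _; case/andP: (DI k).
  apply: ratio.
  - by apply: lt_le_trans Sn; apply: mulr_gt0 => //; rewrite ltr0n.
  - by apply: mulr_gt0 => //; rewrite ltr0n.
  - exact: expR_ge0.
  - by case/andP: (DI i).
  - exact: Sn.
have SF : \sum_(s < F) expR (dotv f (wbar z yF WI s)) <= F%:R * b.
  apply: le_trans (_ : \sum_(s < F) b <= _).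
    by apply: ler_sum => k _; case/andP: (DF k).
  by rewrite sumr_const card_ord mulr_natl.
have Hlo : a / (F%:R * b) <= softmax_prob f (wbar z yF WI) (yF i).
  apply: ratio.
  - by apply: mulr_gt0 => //; rewrite ltr0n.
  - apply: lt_le_trans (_ : a <= _) => //.
    rewrite (bigD1 (yF i)) //= -[X in X <= _]addr0; apply: lerD.
      by case/andP: (DF (yF i)).
    by apply: sumr_ge0 => k _; apply: expR_ge0.
  - exact: ltW.
  - by case/andP: (DF (yF i)).
  - exact: SF.
apply: le_trans Hlo.
have zr : (0 : R) < z%:R by rewrite ltr0n.
have Fr : (0 : R) < F%:R by rewrite ltr0n.
apply: le_trans (_ : b / (n%:R * a) * z%:R * (a / b) ^+ 2 <= _).
  apply: ler_wpM2r; first by apply: exprn_ge0; apply: divr_ge0; apply: ltW.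
  by apply: ler_wpM2r => //; apply: ltW.
rewrite Hn le_eqVlt; apply/orP; left; apply/eqP.
field.
by rewrite !gt_eqF.
Qed.
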